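(* Let $P$ be a finite set of points in the plane in general position (no three collinear) with $|P|$ even. Then $P$ has at most one pairwise crossing perfect matching.
   Context: A perfect matching on $P$ is a partition of $P$ into pairs, each pair $\{a,b\}$ regarded as the straight-line segment $ab$. A perfect matching is pairwise crossing if every two of its segments cross each other. *)

(* Defs.v *)
From mathcomp Require Import all_boot all_order all_algebra.
Set Implicit Arguments. Unset Strict Implicit. Unset Printing Implicit Defensive.
Import Order.TTheory GRing.Theory Num.Theory.
Local Open Scope ring_scope.

Definition pt (R : realFieldType) := (R * R)%type.

Definition collinear (R : realFieldType) (a b c : pt R) : Prop :=
  (b.1 - a.1) * (c.2 - a.2) - (b.2 - a.2) * (c.1 - a.1) = 0.

(* The finite point set P is indexed by a finite type T through an injective
   map p; general position: no three distinct points collinear. *)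
Definition general_position (R : realFieldType) (T : finType) (p : T -> pt R) : Prop :=
  forall a b c : T, a != b -> b != c -> a != c -> ~ collinear (p a) (p b) (p c).

Definition on_segment (R : realFieldType) (a b x : pt R) : Prop :=
  exists t : R, [/\ 0 <= t, t <= 1 &
    x = ((1 - t) * a.1 + t * b.1, (1 - t) * a.2 + t * b.2)].

Definition segments_cross (R : realFieldType) (a b c d : pt R) : Prop :=
  exists x : pt R, on_segment a b x /\ on_segment c d x.

Definition perfect_matching (T : finType) (M : {set {set T}}) : Prop :=
  partition M [set: T] /\ (forall e, e \in M -> #|e| = 2%N).

Definition pair_segment_cross (R : realFieldType) (T : finType) (p : T -> pt R)
  (e f : {set T}) : Prop :=
  exists a b c d : T, [/\ e = [set a; b], f = [set c; d] &
    segments_cross (p a) (p b) (p c) (p d)].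

Definition pairwise_crossing (R : realFieldType) (T : finType) (p : T -> pt R)
  (M : {set {set T}}) : Prop :=
  perfect_matching M /\
  forall e f, e \in M -> f \in M -> e != f -> pair_segment_cross p e f.

(* Main.v *)
Require Import Defs.
From mathcomp Require Import all_boot all_order all_algebra.
From mathcomp Require Import ring lra.
Set Implicit Arguments. Unset Strict Implicit. Unset Printing Implicit Defensive.
Import Order.TTheory GRing.Theory Num.Theory.
Local Open Scope ring_scope.
Definition o (R : realFieldType) (A B X : pt R) : R :=
  (B.1 - A.1) * (X.2 - A.2) - (B.2 - A.2) * (X.1 - A.1).

Lemma sq_pos (R : realFieldType) (u : R) : u != 0 -> 0 < u * u.
Proof. move=> h; rewrite -expr2 exprn_even_gt0 // odd2. Qed.

Lemma opp_sign (R : realFieldType) (u v t : R) : (1-t)*u + t*v = 0 -> 0 <= t -> t <= 1 -> 0 < u*u -> 0 < v * v -> u * v < 0.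
Proof.
move=> e t0 t1 hu hv. rewrite ltNge; apply/negP => huv.
have e2 : (1-t)*(u*u) + t*(u*v) = u * ((1-t)*u + t*v) by ring.
rewrite e mulr0 in e2.
have h1 : (1-t)*(u*u) = 0 by nra.
have ht : t = 1 by nra.
move: e; rewrite ht => e. nra.
Qed.

Lemma on_segment_sym (R : realFieldType) (A B X : pt R) :
  on_segment A B X -> on_segment B A X.
Proof.
move=> [t [t0 t1 ->]]; exists (1 - t); split.
- lra.
- lra.
- congr (_, _); ring.
Qed.

Lemma cross_opp (R : realFieldType) (A B X Y : pt R) :
  segments_cross A B X Y -> o A B X != 0 -> o A B Y != 0 ->
  o A B X * o A B Y < 0.
Proof.
move=> [[z1 z2] [[s [s0 s1 [e1 e2]]] [t [t0 t1 [e3 e4]]]]] hx hy.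
apply: (@opp_sign _ _ _ t) => //; last by apply: sq_pos.
  have -> : (1 - t) * o A B X + t * o A B Y = o A B (z1, z2) by rewrite /o /= e3 e4; ring.
  by rewrite /o /= e1 e2; ring.
by apply: sq_pos.
Qed.

Lemma cross_side (R : realFieldType) (A B C X Y : pt R) :
  segments_cross A B X Y -> o A C B != 0 -> o X Y A != 0 ->
  o A C B * o A C X <= 0 -> o A C B * o A C Y <= 0 -> False.
Proof.
move=> [[z1 z2] [[s [s0 s1 [e1 e2]]] [t [t0 t1 [e3 e4]]]]] hk hA hx hy.
have hkk := sq_pos hk.
have E : s * (o A C B * o A C B) = (1-t) * (o A C B * o A C X) + t * (o A C B * o A C Y).
  have -> : s * (o A C B * o A C B) = o A C B * o A C (z1, z2) by rewrite /o /= e1 e2; ring.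
  by rewrite /o /= e3 e4; ring.
have hs : s = 0 by nra.
move: hA; rewrite /o.
have -> : A.1 = z1 by rewrite e1 hs; ring.
have -> : A.2 = z2 by rewrite e2 hs; ring.
by rewrite e3 e4; apply/negP; rewrite negbK; apply/eqP; ring.
Qed.

Lemma oAA (R : realFieldType) (A B : pt R) : o A B A = 0.
Proof. rewrite /o; ring. Qed.
Lemma oBB (R : realFieldType) (A B : pt R) : o A B B = 0.
Proof. rewrite /o; ring. Qed.
Lemma oswap (R : realFieldType) (A B C : pt R) : o A C B = - o A B C.
Proof. rewrite /o; ring. Qed.
Local Close Scope ring_scope.
Definition partner (T : finType) (M : {set {set T}}) (x : T) : T :=
  odflt x [pick y in pblock M x | y != x].

Lemma pm_cover (T : finType) (M : {set {set T}}) x : perfect_matching M -> x \in cover M.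
Proof. by move=> [/and3P [/eqP -> _ _] _]; rewrite inE. Qed.

Lemma pm_triv (T : finType) (M : {set {set T}}) : perfect_matching M -> trivIset M.
Proof. by move=> [/and3P [_ ? _] _]. Qed.

Lemma partnerP (T : finType) (M : {set {set T}}) x : perfect_matching M ->
  [/\ partner M x \in pblock M x, partner M x != x & pblock M x = [set x; partner M x]].
Proof.
move=> pm; have Hcov := pm_cover x pm.
have Hx : x \in pblock M x by rewrite mem_pblock.
have H2 := pm.2 _ (pblock_mem Hcov).
rewrite /partner; case: pickP => [y /andP[Hy Hyx] | H0] /=.
  split => //; apply/eqP; rewrite eq_sym eqEcard subUset !sub1set Hx Hy H2 cards2 eq_sym Hyx.
  by [].
exfalso.
have : pblock M x \subset [set x].
  apply/subsetP => y Hy; rewrite inE; apply/negPn/negP => hyx.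
  by move: (H0 y); rewrite Hy hyx.
by move/subset_leq_card; rewrite H2 cards1.
Qed.

Lemma partnerK (T : finType) (M : {set {set T}}) x : perfect_matching M ->
  partner M (partner M x) = x.
Proof.
move=> pm; have [h1 h2 h3] := partnerP x pm.
have [g1 g2 g3] := partnerP (partner M x) pm.
have e : pblock M (partner M x) = pblock M x by apply: same_pblock => //; apply: pm_triv.
move: g1; rewrite e h3 !inE => /orP [/eqP // | /eqP hh].
by move: g2; rewrite hh eqxx.
Qed.

Lemma partner_inj (T : finType) (M : {set {set T}}) : perfect_matching M ->
  injective (partner M).
Proof. by move=> pm; apply: (can_inj (fun x => partnerK x pm)). Qed.

Lemma notin_block (T : finType) (M : {set {set T}}) a x : perfect_matching M ->
  x \notin pblock M a ->
  [/\ x != a, x != partner M a, partner M x != a, partner M x != partner M a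
   & partner M x \notin pblock M a].
Proof.
move=> pm hx.
have [h1 h2 h3] := partnerP a pm.
have [g1 g2 g3] := partnerP x pm.
have hy : partner M x \notin pblock M a.
  apply/negP => hy.
  have e1 : pblock M (partner M x) = pblock M a by apply: same_pblock => //; apply: pm_triv.
  have e2 : pblock M (partner M x) = pblock M x by apply: same_pblock => //; apply: pm_triv.
  move: hx; rewrite -e1 e2 g3 !inE eqxx //.
move: hx hy; rewrite h3 !inE !negb_or => /andP[-> ->] /andP[-> ->]; by [].
Qed.

Lemma set2_eq (T : finType) (a b c d : T) : a != b -> [set a; b] = [set c; d] ->
  (c = a /\ d = b) \/ (c = b /\ d = a).
Proof.
move=> hab e.
have hc : c \in [set a; b] by rewrite e !inE eqxx.
have hd : d \in [set a; b] by rewrite e !inE eqxx orbT.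
have ha : a \in [set c; d] by rewrite -e !inE eqxx.
have hb : b \in [set c; d] by rewrite -e !inE eqxx orbT.
move: hc hd ha hb; rewrite !inE.
case/orP=> /eqP hc; case/orP=> /eqP hd; subst c d.
- by rewrite !orbb => _ /eqP hh; move: hab; rewrite hh eqxx.
- by left.
- by right.
- by rewrite !orbb => /eqP hh; move: hab; rewrite hh eqxx.
Qed.

Lemma segments_cross_sym1 (R : realFieldType) (A B X Y : pt R) :
  segments_cross A B X Y -> segments_cross B A X Y.
Proof. by move=> [z [h1 h2]]; exists z; split => //; apply: on_segment_sym. Qed.
Lemma segments_cross_sym2 (R : realFieldType) (A B X Y : pt R) :
  segments_cross A B X Y -> segments_cross A B Y X.
Proof. by move=> [z [h1 h2]]; exists z; split => //; apply: on_segment_sym. Qed.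

Lemma cross_of (R : realFieldType) (T : finType) (p : T -> pt R) M a x :
  pairwise_crossing p M -> x \notin pblock M a ->
  segments_cross (p a) (p (partner M a)) (p x) (p (partner M x)).
Proof.
move=> [pm pc] hx.
have [h1 h2 h3] := partnerP a pm.
have [g1 g2 g3] := partnerP x pm.
have ne : pblock M a != pblock M x.
  apply/negP => /eqP e; move: hx; rewrite e.
  by rewrite mem_pblock (pm_cover x pm).
have [c [d [c' [d' [e1 e2 hc]]]]] :=
  pc _ _ (pblock_mem (pm_cover a pm)) (pblock_mem (pm_cover x pm)) ne.
rewrite h3 in e1; rewrite g3 in e2.
have hcd : segments_cross (p a) (p (partner M a)) (p c') (p d').
  move: hc; case: (set2_eq _ e1); first by rewrite eq_sym.
    by move=> [-> ->].
  by move=> [-> ->]; apply: segments_cross_sym1.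
move: hcd; case: (set2_eq _ e2); first by rewrite eq_sym.
  by move=> [-> ->].
by move=> [-> ->]; apply: segments_cross_sym2.
Qed.
Local Open Scope ring_scope.
Lemma main_contra (R : realFieldType) (T : finType) (p : T -> pt R) M1 M2 a :
  general_position p -> pairwise_crossing p M1 -> pairwise_crossing p M2 ->
  0 < o (p a) (p (partner M1 a)) (p (partner M2 a)) -> False.
Proof.
move=> gp pc1 pc2 hpos.
have pm1 := pc1.1; have pm2 := pc2.1.
set b := partner M1 a in hpos; set b' := partner M2 a in hpos.
have ns : forall u v : T, u != v -> v != u by move=> u v; rewrite eq_sym.
have gpo : forall u v w, u != v -> v != w -> u != w -> o (p u) (p v) (p w) != 0.
  by move=> u v w h1 h2 h3; apply/eqP; exact: gp u v w h1 h2 h3.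
have [hb1 hb2 hb3] := partnerP a pm1.
have [hc1 hc2 hc3] := partnerP a pm2.
rewrite -/b in hb1 hb2 hb3; rewrite -/b' in hc1 hc2 hc3.
pose ob x := o (p a) (p b) (p x).
pose ob' x := o (p a) (p b') (p x).
have notin1 : forall x, ob x != 0 -> x \notin pblock M1 a.
  move=> x hx; rewrite hb3 !inE; apply/negP => /orP [] /eqP e; move: hx;
  by rewrite /ob e ?oAA ?oBB eqxx.
have notin2 : forall x, ob' x != 0 -> x \notin pblock M2 a.
  move=> x hx; rewrite hc3 !inE; apply/negP => /orP [] /eqP e; move: hx;
  by rewrite /ob' e ?oAA ?oBB eqxx.
have obb' : ob b' = o (p a) (p b) (p b') by [].
have ob'b : ob' b = - ob b' by rewrite /ob' /ob oswap.
have ob'b' : ob' b' = 0 by rewrite /ob' oBB.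
pose Left := [set x | 0 < ob x].
pose Right := [set x | ob x < 0].
have hA : (#|Left| <= #|Right|)%N.
  rewrite -(@card_in_imset _ _ (partner M1) Left); last first.
    by move=> ? ? _ _; apply: partner_inj.
  apply: subset_leq_card; apply/subsetP => _ /imsetP[x hx ->].
  rewrite inE in hx; rewrite inE.
  have nx := notin1 x (lt0r_neq0 hx).
  have [d1 d2 d3 d4 d5] := notin_block pm1 nx.
  have := cross_opp (cross_of pc1 nx)
    (gpo _ _ _ (ns _ _ hb2) (ns _ _ d2) (ns _ _ d1))
    (gpo _ _ _ (ns _ _ hb2) (ns _ _ d4) (ns _ _ d3)).
  rewrite -/(ob x) -/(ob _) => h; nra.
pose g x := if 0 < ob' x then partner M1 x else partner M2 x.
have hg : forall x, x \in Right ->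
  [/\ g x \in Left :\ b', 0 < ob' x -> ob' (g x) < 0 & ~~ (0 < ob' x) -> 0 < ob' (g x)].
  move=> x; rewrite inE => hx; rewrite /g.
  have nx := notin1 x (ltr0_neq0 hx).
  case: ifP => h.
  - have [d1 d2 d3 d4 d5] := notin_block pm1 nx.
    have [_ d6 _] := partnerP x pm1.
    have cr := cross_of pc1 nx.
    have := cross_opp cr
      (gpo _ _ _ (ns _ _ hb2) (ns _ _ d2) (ns _ _ d1))
      (gpo _ _ _ (ns _ _ hb2) (ns _ _ d4) (ns _ _ d3)).
    rewrite -/(ob x) -/(ob _) => hy.
    have hk : o (p a) (p b') (p b) != 0 by rewrite -/(ob' b) ob'b oppr_eq0; apply: lt0r_neq0.
    have hAx : o (p x) (p (partner M1 x)) (p a) != 0 by apply: gpo => //; rewrite ns.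
    have hy' : ~~ (0 <= ob' (partner M1 x)).
      apply/negP => hy'; apply: (cross_side cr hk hAx); rewrite -/(ob' b) -/(ob' x) -/(ob' _); nra.
    rewrite -ltNge in hy'.
    split => //; rewrite !inE; apply/andP; split; last by nra.
    by apply/negP => /eqP e; move: hy'; rewrite e ob'b' ltxx.
  - have hx' : ob' x != 0.
      apply: gpo.
      + exact: ns _ _ hc2.
      + by apply/negP => /eqP e; move: hx; rewrite -e; nra.
      + by apply/negP => /eqP e; move: hx; rewrite -e /ob oAA ltxx.
    have hxn : ob' x < 0 by move: h hx'; rewrite -/(ob' x); case: ltrgtP.
    have nx2 := notin2 x hx'.
    have [d1 d2 d3 d4 d5] := notin_block pm2 nx2.
    have [_ d6 _] := partnerP x pm2.
    have cr := cross_of pc2 nx2.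
    have := cross_opp cr
      (gpo _ _ _ (ns _ _ hc2) (ns _ _ d2) (ns _ _ d1))
      (gpo _ _ _ (ns _ _ hc2) (ns _ _ d4) (ns _ _ d3)).
    rewrite -/(ob' x) -/(ob' _) => hy.
    have hk : o (p a) (p b) (p b') != 0 by apply: lt0r_neq0.
    have hAx : o (p x) (p (partner M2 x)) (p a) != 0 by apply: gpo => //; rewrite ns.
    have hy' : ~~ (0 >= ob (partner M2 x)).
      apply/negP => hy'; apply: (cross_side cr hk hAx); rewrite -/(ob b') -/(ob x) -/(ob _); nra.
    rewrite -ltNge in hy'.
    split; [rewrite !inE; apply/andP; split => // | by move=> hh; move: h; rewrite hh | move=> _; nra].
have hB : (#|Right| <= #|Left :\ b'|)%N.
  rewrite -(@card_in_imset _ _ g Right); last first.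
    move=> x1 x2 h1 h2 e.
    have [_ b1 c1] := hg x1 h1; have [_ b2 c2] := hg x2 h2.
    case E1: (0 < ob' x1); case E2: (0 < ob' x2).
    - by move: e; rewrite /g E1 E2; apply: partner_inj.
    - have := b1 E1; have := c2 (negbT E2); rewrite -e => u v; exfalso; lra.
    - have := c1 (negbT E1); have := b2 E2; rewrite -e => u v; exfalso; lra.
    - by move: e; rewrite /g E1 E2; apply: partner_inj.
  apply: subset_leq_card; apply/subsetP => _ /imsetP[x hx ->].
  by have [] := hg x hx.
have hL : b' \in Left by rewrite inE.
move: hA hB; rewrite (cardsD1 b' Left) hL.
move=> h1 h2; have := leq_trans h1 h2; by rewrite ltnn.
Qed.

Theorem theorem8 (R : realFieldType) (T : finType) (p : T -> pt R) :
  injective p -> general_position p -> ~~ odd #|T| ->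
  forall M1 M2 : {set {set T}},
    pairwise_crossing p M1 -> pairwise_crossing p M2 -> M1 = M2.
Proof.
move=> pinj gp _ M1 M2 pc1 pc2.
have eqb : forall a, pblock M1 a = pblock M2 a.
  move=> a; have [_ h2 h3] := partnerP a pc1.1; have [_ g2 g3] := partnerP a pc2.1.
  case: (eqVneq (partner M1 a) (partner M2 a)) => [e | ne]; first by rewrite h3 g3 e.
  have hn : o (p a) (p (partner M1 a)) (p (partner M2 a)) != 0%R.
    by apply/eqP; apply: gp => //; rewrite eq_sym.
  have [hneg|hposi|heq] := ltrgtP (o (p a) (p (partner M1 a)) (p (partner M2 a))) 0%R.
  - exfalso; apply: (main_contra gp pc2 pc1); rewrite oswap; lra.
  - exfalso; exact: (main_contra gp pc1 pc2 hposi).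
  - by move: hn; rewrite heq eqxx.
have sub : forall M M' : {set {set T}}, perfect_matching M -> perfect_matching M' ->
    (forall a, pblock M a = pblock M' a) -> forall e, e \in M -> e \in M'.
  move=> M M' pm pm' h e he.
  have := pm.2 _ he.
  case: (set_0Vmem e) => [-> | [x hx]]; first by rewrite cards0.
  move=> _; rewrite -(def_pblock (pm_triv pm) he hx) h; apply: pblock_mem; exact: pm_cover.
apply/setP => e; apply/idP/idP; first exact: (sub _ _ pc1.1 pc2.1 eqb).
by apply: (sub _ _ pc2.1 pc1.1) => a; rewrite eqb.
Qed.
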